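(* With $P_\lambda$ and its concave hull $\bar P_\lambda$ as below: (a) if $0\le\lambda'<\lambda<1$ and $P_\lambda(q)<\bar P_\lambda(q)$, then $P_{\lambda'}(q)<\bar P_{\lambda'}(q)$; (b) if $1<\lambda<\lambda'$ and $P_\lambda(q)<\bar P_\lambda(q)$, then $P_{\lambda'}(q)<\bar P_{\lambda'}(q)$.
   Context: $F$ is a value distribution (support $[v_L,v_H]$ or $[v_L,\infty)$, $v_L\ge0$, atomless except possibly at $v_H$, finite mean). The value function is $v(q)=\inf\{v:F(v)>1-q\}$ for $q\in[0,1]$ (nonincreasing, nonnegative). For $\lambda\ge0$, $P_\lambda(q)=\lambda\int_0^qv(t)\,dt+(1-\lambda)\,q\,v(q)$ on $[0,1]$, and $\bar P_\lambda$ denotes the concave hull (smallest concave majorant) of $P_\lambda$ on $[0,1]$. *)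

(* Defs.v *)
From HB Require Import structures.
From mathcomp Require Import all_boot all_order all_algebra.
From mathcomp Require Import all_classical all_reals all_analysis.
Set Implicit Arguments. Unset Strict Implicit. Unset Printing Implicit Defensive.
Import Order.TTheory GRing.Theory Num.Theory numFieldNormedType.Exports.
Local Open Scope classical_set_scope.
Local Open Scope ring_scope.

(* F is a value distribution (CDF) with support [vL, vH] (vH finite) or
   [vL, +oo) (vH = +oo), vL >= 0, atomless except possibly at vH,
   finite mean. *)
Definition value_distribution (R : realType) (F : R -> R) (vL : R)
    (vH : \bar R) : Prop :=
  (0 <= vL) /\ (vL%:E <= vH)%E /\
  {homo F : x y / x <= y} /\
  (forall x, x < vL -> F x = 0) /\
  (* every point of [vL, vH] is in the support *)
  (forall x y, vL <= x -> x < y -> (y%:E <= vH)%E -> F x < F y) /\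
  (forall x, (vH <= x%:E)%E -> F x = 1) /\
  (F x @[x --> +oo%R] --> (1 : R)) /\
  (* atomless except possibly at vH (right-continuity at vH follows
     from the previous conditions) *)
  (forall x, x%:E != vH -> {for x, continuous F}) /\
  (* finite mean: E[X] = int_0^oo (1 - F x) dx for X >= 0 *)
  (\int[lebesgue_measure]_(x in `[0%R, +oo[) (1 - F x)%:E < +oo)%E.

Definition value_fun (R : realType) (F : R -> R) (q : R) : R :=
  inf [set x : R | 1 - q < F x].

Definition Plam (R : realType) (F : R -> R) (lam : R) (q : R) : R :=
  lam * fine (\int[lebesgue_measure]_(t in `[0%R, q]) (value_fun F t)%:E)
  + (1 - lam) * q * value_fun F q.

Definition concave01 (R : realType) (g : R -> R) : Prop :=
  forall x y t, 0 <= x <= 1 -> 0 <= y <= 1 -> 0 <= t <= 1 ->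
    t * g x + (1 - t) * g y <= g (t * x + (1 - t) * y).

Definition concave_hull (R : realType) (P : R -> R) (q : R) : R :=
  inf [set g q | g in [set g : R -> R |
         concave01 g /\ (forall x, 0 <= x <= 1 -> P x <= g x)]].

(* Main.v *)
Require Import Defs.
From HB Require Import structures.
From mathcomp Require Import all_boot all_order all_algebra.
From mathcomp Require Import all_classical all_reals all_analysis.
From mathcomp Require Import ring lra.
Import Order.TTheory GRing.Theory Num.Theory numFieldNormedType.Exports.
Local Open Scope ring_scope.
Local Open Scope classical_set_scope.
From mathcomp Require Import measurable_realfun.
Section VF.
Variable R : realType.
Variables (F : R -> R) (vL : R) (vH : \bar R).
Hypothesis hF : value_distribution F vL vH.

Lemma F_le1 x : F x <= 1.
Proof.
case: hF => vL0 [_ [Fmono [Fbelow [_ [_ [Flim _]]]]]].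
rewrite leNgt; apply/negP => Fx.
have := cvgr_lt 1 Flim _ Fx.
move=> H; have [M xM FM] := pinfty_ex_gt (num_real x) (H _).
by move: FM; rewrite ltNge Fmono // ltW.
Qed.

Lemma F_ge0 x : 0 <= F x.
Proof.
case: hF => vL0 [_ [Fmono [Fbelow _]]].
have h0 : F (vL - 1) = 0 by apply: Fbelow; lra.
have [le|lt] := leP (vL - 1) x.
  by rewrite -h0 Fmono.
by rewrite Fbelow //; lra.
Qed.

Lemma F_ev (a : R) : a < 1 -> exists x, a < F x.
Proof.
case: hF => vL0 [_ [Fmono [Fbelow [_ [_ [Flim _]]]]]] a1.
have := cvgr_gt 1 Flim _ a1.
move=> H; have [M _ FM] := pinfty_ex_gt (num_real 0) (H _).
by exists M.
Qed.

Lemma vf_ge0 q : 0 <= q <= 1 -> 0 <= value_fun F q.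
Proof.
move=> /andP[q0 q1]; rewrite /value_fun.
case: hF => vL0 [_ [Fmono [Fbelow _]]].
have [->|ne] := eqVneq [set x | 1 - q < F x] set0; first by rewrite inf0.
apply: (le_trans vL0); apply: lb_le_inf; first exact/set0P.
rewrite /lbound /= => x Fx; rewrite leNgt; apply/negP => xv.
by move: Fx; rewrite Fbelow //; lra.
Qed.

Lemma vf_noninc s t : 0 < s -> s <= t -> t <= 1 -> value_fun F t <= value_fun F s.
Proof.
move=> s0 st t1; rewrite /value_fun.
case: hF => vL0 [_ [Fmono [Fbelow _]]].
have lbt : lbound [set x | 1 - t < F x] vL.
  rewrite /lbound /= => x Fx; rewrite leNgt; apply/negP => xv.
  by move: Fx; rewrite Fbelow //; lra.
have [x Fx] : exists x, 1 - s < F x by apply: F_ev; lra.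
apply: lb_le_inf; first by exists x.
rewrite /lbound /= => y Fy; apply: ge_inf; first by exists vL.
rewrite /=; lra.
Qed.

Lemma vf_meas : measurable_fun (`]0, 1] : set R) (value_fun F).
Proof.
apply: (measurability (@RGenCInfty.G R)) => [|/= _ [_] [r] -> <-].
  exact: RGenCInfty.measurableE.
apply: is_interval_measurable => s t [hs1 hs2] [ht1 ht2] u /andP[su ut].
move: hs1 hs2 ht1 ht2 => /=; rewrite /= !in_itv /= ?andbT.
move=> /andP[s0 s1] rs /andP[t0 t1] rt; split.
  apply/andP; split; lra.
apply: (le_trans rt); apply: vf_noninc; lra.
Qed.


Lemma vf_meas01 : measurable_fun (`[0, 1] : set R) (value_fun F).
Proof.
rewrite (@itv_bndbnd_setU _ _ (BLeft 0) (BRight 0) (BRight 1)) //; last by rewrite bnd_simp.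
rewrite set_itv1; apply/measurable_funU => //; split.
  exact: measurable_fun_set1.
exact: vf_meas.
by rewrite bnd_simp.
Qed.

Lemma vf_measE (D : set R) : measurable D -> D `<=` `[0, 1] ->
  measurable_fun D (fun t => (value_fun F t)%:E).
Proof.
move=> mD sD; apply/measurable_EFinP; exact: (measurable_funS _ sD vf_meas01).
Qed.

Definition J (a : R) := (\int[lebesgue_measure]_(t in `[0%R, a]) (value_fun F t)%:E)%E.
Definition K (a b : R) := (\int[lebesgue_measure]_(t in `]a, b]) (value_fun F t)%:E)%E.

Lemma J_split a b : 0 <= a -> a <= b -> b <= 1 -> J b = (J a + K a b)%E.
Proof.
move=> a0 ab b1; rewrite /J /K.
rewrite (@itv_bndbnd_setU _ _ (BLeft 0) (BRight a) (BRight b)) ?bnd_simp //.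
rewrite ge0_integral_setU //.
- rewrite -(@itv_bndbnd_setU _ _ (BLeft 0) (BRight a) (BRight b)) ?bnd_simp //.
  apply: vf_measE => // x /=; rewrite !in_itv /= => /andP[? ?]; apply/andP; split; lra.
- rewrite -(@itv_bndbnd_setU _ _ (BLeft 0) (BRight a) (BRight b)) ?bnd_simp //.
  move=> x /=; rewrite in_itv /= => /andP[? ?]; rewrite lee_fin; apply: vf_ge0; apply/andP; split; lra.
- rewrite disj_set2E; apply/eqP/seteqP; split => x //= [].
  rewrite !in_itv /= => /andP[? ?] /andP[? ?]; lra.
Qed.

Lemma K_lb a b : 0 <= a -> a < b -> b <= 1 -> (((b - a) * value_fun F b)%:E <= K a b)%E.
Proof.
move=> a0 ab b1; rewrite /K.
have -> : ((b - a) * value_fun F b)%:E =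
  (\int[lebesgue_measure]_(t in `]a, b]) (cst (value_fun F b)%:E) t)%E.
  rewrite integral_cst //.
  have hm := lebesgue_measure_itv (`]a, b]%O : interval R).
  rewrite /= lte_fin ab in hm.
  rewrite [X in (_ * X)%E]hm -EFinD EFinM.
  by rewrite muleC.
apply: ge0_le_integral => //.
- by move=> x _; rewrite lee_fin vf_ge0 //; apply/andP; split; lra.
- by apply: vf_measE => // x /=; rewrite !in_itv /= => /andP[? ?]; apply/andP; split; lra.
- move=> x /=; rewrite in_itv /= => /andP[? ?]; rewrite lee_fin; apply: vf_noninc; lra.
Qed.

Lemma K_ub a b : 0 < a -> a < b -> b <= 1 -> (K a b <= ((b - a) * value_fun F a)%:E)%E.
Proof.
move=> a0 ab b1; rewrite /K.
have -> : ((b - a) * value_fun F a)%:E =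
  (\int[lebesgue_measure]_(t in `]a, b]) (cst (value_fun F a)%:E) t)%E.
  rewrite integral_cst //.
  have hm := lebesgue_measure_itv (`]a, b]%O : interval R).
  rewrite /= lte_fin ab in hm.
  rewrite [X in (_ * X)%E]hm -EFinD EFinM.
  by rewrite muleC.
apply: ge0_le_integral => //.
- by move=> x /=; rewrite in_itv /= => /andP[? ?]; rewrite lee_fin vf_ge0 //; apply/andP; split; lra.
- by apply: vf_measE => // x /=; rewrite !in_itv /= => /andP[? ?]; apply/andP; split; lra.
- move=> x /=; rewrite in_itv /= => /andP[? ?]; rewrite lee_fin; apply: vf_noninc; lra.
Qed.

Lemma K_ge0 a b : 0 <= a -> b <= 1 -> (0 <= K a b)%E.
Proof.
move=> a0 b1; apply: integral_ge0 => x /=; rewrite in_itv /= => /andP[? ?].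
rewrite lee_fin vf_ge0 //; apply/andP; split; lra.
Qed.

Lemma J_ge0 a : a <= 1 -> (0 <= J a)%E.
Proof.
move=> a1; apply: integral_ge0 => x /=; rewrite in_itv /= => /andP[? ?].
rewrite lee_fin vf_ge0 //; apply/andP; split; lra.
Qed.

Lemma J0 : J 0 = 0%E.
Proof. by rewrite /J set_itv1 integral_set1. Qed.

Lemma I_chord x y t : 0 <= x -> x < y -> y <= 1 -> 0 < t -> t < 1 ->
  t * fine (J x) + (1 - t) * fine (J y) <= fine (J (t * x + (1 - t) * y)).
Proof.
move=> x0 xy y1 t0 t1.
set z := t * x + (1 - t) * y.
have xz : x < z by rewrite /z; nra.
have zy : z < y by rewrite /z; nra.
have Jz' : J z = (J x + K x z)%E by apply: J_split; lra.
have Jy : J y = (J z + K z y)%E by apply: J_split; lra.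
have Kxz0 := @K_ge0 x z x0 ltac:(lra).
have Kzy0 := @K_ge0 z y ltac:(lra) y1.
have Jx0 := @J_ge0 x ltac:(lra).
have Kub := @K_ub z y ltac:(lra) zy y1.
have Klb := @K_lb x z x0 xz ltac:(lra).
have vz0 : 0 <= value_fun F z by apply: vf_ge0; apply/andP; split; lra.
move: Jz' Jy Kxz0 Kzy0 Jx0 Kub Klb.
case Ez: (J z) => [r| |]; last first.
- by have := @J_ge0 z ltac:(lra); rewrite Ez.
- move=> Jxz Jy _ Kzy0 _ _ _.
  have -> : J y = +oo%E by move: Kzy0; rewrite Jy; case: (K z y).
  have -> : fine (J x) = 0.
    have [->|x0'] := eqVneq x 0; first by rewrite J0.
    have Kxzf := @K_ub x z ltac:(lra) xz ltac:(lra).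
    move: Jxz Kxzf; case: (J x) => [jx| |] //=.
    by case: (K x z) => [k| |].
  by rewrite /= !mulr0 addr0.
move=> Jxz Jy.
case: (J x) Jxz => [jx| |]; case: (K x z) => [k1| |] //= Jxz.
case: (K z y) Jy => [k2| |] //= Jy _ _ _ Kub Klb.
move: Klb Kub; rewrite !lee_fin => Klb Kub.
have -> : J y = (r + k2)%:E by rewrite Jy.
have r_eq : r = jx + k1 by move: Jxz => [->].
rewrite /= r_eq.
have h1 : (1 - t) * k2 <= (1 - t) * ((y - z) * value_fun F z) by apply: ler_wpM2l; lra.
have h2 : t * ((z - x) * value_fun F z) <= t * k1 by apply: ler_wpM2l; lra.
have e : (1 - t) * ((y - z) * value_fun F z) = t * ((z - x) * value_fun F z) by rewrite /z; ring.
lra.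
Qed.

Lemma I_concave : concave01 (fun q => fine (J q)).
Proof.
move=> x y t /andP[x0 x1] /andP[y0 y1] /andP[t0 t1].
have [->|xy] := eqVneq x y.
  have -> : t * y + (1 - t) * y = y by ring.
  by rewrite -mulrDl addrC subrK mul1r.
have [->|tn0] := eqVneq t 0.
  by rewrite mul0r add0r subr0 !mul1r mul0r add0r.
have [->|tn1] := eqVneq t 1.
  by rewrite subrr !mul0r !addr0 !mul1r.
have t0' : 0 < t by rewrite lt_neqAle eq_sym tn0.
have t1' : t < 1 by rewrite lt_neqAle tn1.
have [lt|gt] := ltP x y.
  by apply: I_chord.
have yx : y < x by rewrite lt_neqAle gt andbT eq_sym.
have := @I_chord y x (1 - t) y0 yx x1 ltac:(lra) ltac:(lra).
have -> : 1 - (1 - t) = t by ring.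
have -> : (1 - t) * y + t * x = t * x + (1 - t) * y by ring.
by rewrite addrC.
Qed.

Lemma I_ge0 q : q <= 1 -> 0 <= fine (J q).
Proof. by move=> q1; apply: fine_ge0; apply: J_ge0. Qed.

End VF.
Section Hull.
Variable R : realType.

Definition maj (P : R -> R) := [set g : R -> R |
         concave01 g /\ (forall x, 0 <= x <= 1 -> P x <= g x)].

Lemma hull_transfer (P P' I : R -> R) (c q : R) :
  0 < c -> concave01 I -> (forall x, 0 <= x <= 1 -> 0 <= I x) ->
  (forall x, P' x = c * P x - I x) -> 0 <= q <= 1 ->
  P q < concave_hull P q -> P' q < concave_hull P' q.
Proof.
move=> c0 Ic I0 PP' q01 HP.
rewrite ltNge; apply/negP => H'.
move: HP; apply/negP; rewrite -leNgt.
have cM g : maj P g -> maj P' (fun x => c * g x).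
  move=> [gc gm]; split.
    move=> x y t hx hy ht.
    have := gc x y t hx hy ht => h.
    have -> : t * (c * g x) + (1 - t) * (c * g y) = c * (t * g x + (1 - t) * g y) by ring.
    by rewrite ler_pM2l.
  move=> x hx; rewrite PP'.
  have h1 := gm x hx; have h2 := I0 x hx.
  have : c * P x <= c * g x by rewrite ler_pM2l.
  lra.
have hM g : maj P' g -> maj P (fun x => (g x + I x) / c).
  move=> [gc gm]; split.
    move=> x y t hx hy ht.
    have := gc x y t hx hy ht => h1.
    have := Ic x y t hx hy ht => h2.
    have -> : t * ((g x + I x) / c) + (1 - t) * ((g y + I y) / c) =
       ((t * g x + (1 - t) * g y) + (t * I x + (1 - t) * I y)) / c.
      by field; rewrite gt_eqF.
    by rewrite ler_pM2r ?invr_gt0 //; lra.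
  move=> x hx; rewrite ler_pdivlMr //.
  have := gm x hx; rewrite PP' => h; lra.
rewrite /concave_hull.
have [[g0 Mg0]|nM] := pselect (exists g, maj P' g); last first.
  have eP : [set g q | g in maj P] = set0.
    apply/seteqP; split => // _ [g Mg <-]; apply: nM; exists (fun x => c * g x).
    exact: cM.
  have eP' : [set g q | g in maj P'] = set0.
    apply/seteqP; split => // _ [g Mg <-]; apply: nM; exists g; exact: Mg.
  move: H'; rewrite /concave_hull -/(maj P') eP' inf0 => H'.
  rewrite -/(maj P) eP inf0.
  have h2 := I0 q q01; rewrite PP' in H'.
  have : 0 <= c * P q by lra.
  by rewrite pmulr_rge0.
apply/ler_addgt0Pr => e e0.
have lbP' : lbound [set g q | g in maj P'] (P' q).
  by move=> _ [g [_ gm] <-]; apply: gm.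
have lbP : lbound [set g q | g in maj P] (P q).
  by move=> _ [g [_ gm] <-]; apply: gm.
have hinf : has_inf [set g q | g in maj P'].
  split; first by exists (g0 q), g0.
  by exists (P' q).
have [_ [gp Mgp <-] lt] := inf_adherent (mulr_gt0 c0 e0) hinf.
have H'' : inf [set g q | g in maj P'] <= P' q by exact: H'.
have hq : [set g q | g in maj P] ((gp q + I q) / c).
  by exists (fun x => (gp x + I x) / c) => //; apply: hM.
apply: (le_trans (ge_inf _ hq)); first by exists (P q).
rewrite ler_pdivrMr //.
have : gp q < P' q + c * e by lra.
rewrite PP'.
have -> : (P q + e) * c = c * P q + c * e by ring.
lra.
Qed.
End Hull.

Lemma concave_scale (R : realType) (I : R -> R) (e : R) : 0 <= e -> concave01 I ->
  concave01 (fun x => e * I x).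
Proof.
move=> e0 Ic x y t hx hy ht.
have -> : t * (e * I x) + (1 - t) * (e * I y) = e * (t * I x + (1 - t) * I y) by ring.
by apply: ler_wpM2l => //; apply: Ic.
Qed.

Theorem propositionB2 (R : realType) (F : R -> R) (vL : R) (vH : \bar R)
  (q : R) :
  value_distribution F vL vH -> 0 <= q <= 1 ->
  (forall lam lam' : R, 0 <= lam' -> lam' < lam -> lam < 1 ->
     Plam F lam q < concave_hull (Plam F lam) q ->
     Plam F lam' q < concave_hull (Plam F lam') q) /\
  (forall lam lam' : R, 1 < lam -> lam < lam' ->
     Plam F lam q < concave_hull (Plam F lam) q ->
     Plam F lam' q < concave_hull (Plam F lam') q).
Proof.
move=> hF q01; split.
- move=> lam lam' l0 ll l1.
  have l1' : 0 < 1 - lam by lra.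
  apply: (@hull_transfer R (Plam F lam) (Plam F lam')
     (fun x => ((lam - lam') / (1 - lam)) * fine (J _ F x)) ((1 - lam') / (1 - lam)) q) => //.
  + by apply: divr_gt0; lra.
  + apply: concave_scale; first by apply: divr_ge0; lra.
    exact: (@I_concave _ F vL vH hF).
  + move=> x /andP[_ x1]; apply: mulr_ge0; first by apply: divr_ge0; lra.
    exact: (@I_ge0 _ F vL vH hF).
  + move=> x; rewrite /Plam /J; field.
    by rewrite gt_eqF.
- move=> lam lam' l1 ll.
  have l1' : 0 < lam - 1 by lra.
  apply: (@hull_transfer R (Plam F lam) (Plam F lam')
     (fun x => ((lam' - lam) / (lam - 1)) * fine (J _ F x)) ((lam' - 1) / (lam - 1)) q) => //.
  + by apply: divr_gt0; lra.
  + apply: concave_scale; first by apply: divr_ge0; lra.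
    exact: (@I_concave _ F vL vH hF).
  + move=> x /andP[_ x1]; apply: mulr_ge0; first by apply: divr_ge0; lra.
    exact: (@I_ge0 _ F vL vH hF).
  + move=> x; rewrite /Plam /J; field.
    by rewrite gt_eqF.
Qed.
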